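(* Let $k$ be a non-archimedean local field of residue characteristic $2$, with ring of integers $\mathfrak o$ and normalized valuation $\operatorname{ord}$. Let $B(x)=\sum_{i=1}^n a_i x_i^2$ be a diagonal quadratic form on $k^n$ with coefficients $a_i\in k$ satisfying $0\le \operatorname{ord} a_i\le 1$ for all $i$, and suppose $B$ is anisotropic over $k$. Then for every nonzero $x\in k^n$, \[ \max_i |a_i x_i^2| \;\ge\; |B(x)| \;\ge\; \max_i |4 a_i x_i^2| . \]
   Context: $|\cdot|$ is the normalized absolute value on $k$ ($|\varpi|=q^{-1}$ for a uniformizer $\varpi$, where $q$ is the cardinality of the residue field). A quadratic form is anisotropic if $B(x)=0$ only for $x=0$. *)

(* Defs.v *)
From HB Require Import structures.
From mathcomp Require Import all_boot all_order all_algebra.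
Set Implicit Arguments. Unset Strict Implicit. Unset Printing Implicit Defensive.
Import Order.TTheory GRing.Theory Num.Theory.
Local Open Scope ring_scope.

(* A non-archimedean local field with residue characteristic 2, presented
   through its normalized discrete valuation [ord] (defined on nonzero
   elements; the value at 0 is irrelevant and never used, 0 having
   valuation +oo by convention). *)

Section LocalField.
Variable k : fieldType.

Definition ord_ge (ord : k -> int) (N : int) (z : k) : Prop :=
  z = 0 \/ N <= ord z.

Definition in_o (ord : k -> int) (z : k) : Prop := ord_ge ord 0 z.
Definition in_m (ord : k -> int) (z : k) : Prop := ord_ge ord 1 z.

Record local_field_res2 := LocalFieldRes2 {
  ord : k -> int;
  (* cardinality of the residue field o/m *)
  resq : nat;
  ordM : forall x y, x != 0 -> y != 0 -> ord (x * y) = ord x + ord y;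
  ordD : forall x y, x != 0 -> y != 0 -> x + y != 0 ->
           Num.min (ord x) (ord y) <= ord (x + y);
  (* normalized: a uniformizer exists *)
  ord_unif : exists pi : k, pi != 0 /\ ord pi = 1;
  res_finite : exists s : seq k,
      [/\ size s = resq,
          forall i, (i < size s)%N -> in_o ord (nth 0 s i),
          forall i j, (i < j < size s)%N -> ~ in_m ord (nth 0 s i - nth 0 s j)
        & forall z, in_o ord z -> exists2 r, r \in s & in_m ord (z - r)];
  res_char2 : in_m ord 2%:R;
  complete : forall u : nat -> k,
      (forall N : int, exists M : nat, forall m n : nat, (M <= m)%N -> (M <= n)%N ->
          ord_ge ord N (u m - u n)) ->
      exists l : k, forall N : int, exists M : nat, forall n : nat, (M <= n)%N ->
          ord_ge ord N (u n - l)
}.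

Definition absv (K : local_field_res2) (x : k) : rat :=
  if x == 0 then 0 else ((resq K)%:R : rat) ^ (- ord K x).

End LocalField.

Definition diagB (k : fieldType) (n : nat) (a x : 'I_n -> k) : k :=
  \sum_(i < n) a i * x i ^+ 2.

Definition anisotropic (k : fieldType) (n : nat) (a : 'I_n -> k) : Prop :=
  forall x : 'I_n -> k, diagB a x = 0 -> forall i, x i = 0.

(* Main.v *)
Require Import Defs.
From mathcomp Require Import all_boot all_order all_algebra.
From mathcomp Require Import zify ring.
Set Implicit Arguments. Unset Strict Implicit. Unset Printing Implicit Defensive.
Import Order.TTheory GRing.Theory Num.Theory.
Local Open Scope ring_scope.

Lemma int_dbl (t : int) : t = t + t -> t = 0. Proof. lia. Qed.
Lemma int_dbl2 (t : int) : 0 = t + t -> t = 0. Proof. lia. Qed.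

Section Aux.
Variable k : fieldType.
Variable K : local_field_res2 k.
Local Notation o := (ord K).

Lemma ord1 : o 1 = 0.
Proof. have := ordM K (oner_neq0 k) (oner_neq0 k); rewrite mulr1; exact: int_dbl. Qed.

Lemma ordN1 : o (-1) = 0.
Proof.
have h : (-1 : k) != 0 by rewrite oppr_eq0 oner_neq0.
have := ordM K h h; rewrite mulrNN mulr1 ord1; exact: int_dbl2.
Qed.

Lemma ordN z : z != 0 -> o (- z) = o z.
Proof.
move=> hz; have h : (-1 : k) != 0 by rewrite oppr_eq0 oner_neq0.
by rewrite -mulN1r (ordM K h hz) ordN1 add0r.
Qed.

Lemma ord_geD N x y : ord_ge o N x -> ord_ge o N y -> ord_ge o N (x + y).
Proof.
case=> [->|hx]; first by rewrite add0r.
case=> [->|hy]; first by rewrite addr0; right.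
have [->|s0] := eqVneq (x + y) 0; first by left.
have [->|x0] := eqVneq x 0; first by rewrite add0r; right.
have [->|y0] := eqVneq y 0; first by rewrite addr0; right.
right; apply: le_trans (ordD K x0 y0 s0).
by rewrite le_min hx hy.
Qed.

Lemma ord_geN N x : ord_ge o N x -> ord_ge o N (- x).
Proof.
case=> [->|hx]; first by rewrite oppr0; left.
have [->|x0] := eqVneq x 0; first by rewrite oppr0; left.
by right; rewrite ordN.
Qed.

Lemma ord_geB N x y : ord_ge o N x -> ord_ge o N y -> ord_ge o N (x - y).
Proof. by move=> hx hy; apply: ord_geD => //; apply: ord_geN. Qed.

Lemma ord_geM N1 N2 x y : ord_ge o N1 x -> ord_ge o N2 y -> ord_ge o (N1 + N2) (x * y).
Proof.
case=> [->|hx]; first by rewrite mul0r; left.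
case=> [->|hy]; first by rewrite mulr0; left.
have [->|x0] := eqVneq x 0; first by rewrite mul0r; left.
have [->|y0] := eqVneq y 0; first by rewrite mulr0; left.
by right; rewrite ordM // lerD.
Qed.

Lemma ord_geW N1 N2 x : N1 <= N2 -> ord_ge o N2 x -> ord_ge o N1 x.
Proof. by move=> h [->|hx]; [left|right; apply: le_trans hx]. Qed.

Lemma ord_ge_all z : (forall N, ord_ge o N z) -> z = 0.
Proof.
move=> h; have [//|z0] := eqVneq z 0.
case: (h (o z + 1)) => [//|]; lia.
Qed.

Fixpoint zseq (w : k) (m : nat) : k :=
  if m is m'.+1 then w - zseq w m' ^+ 2 else 0.

Lemma hensel w : in_m o w -> exists z, z + z ^+ 2 = w /\ in_m o z.
Proof.
move=> hw.
have zm : forall m, in_m o (zseq w m).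
  elim=> [|m IH] /=; first by left.
  apply: ord_geB => //; rewrite expr2.
  by apply: (ord_geW (N2 := 1 + 1)) => //; apply: ord_geM.
have step : forall m : nat, ord_ge o m.+1%:Z (zseq w m.+1 - zseq w m).
  elim=> [|m IH]; first by rewrite /= subr0 expr2 mulr0 subr0.
  have -> : zseq w m.+2 - zseq w m.+1 =
      - ((zseq w m.+1 - zseq w m) * (zseq w m.+1 + zseq w m)).
    by rewrite /=; ring.
  apply: ord_geN.
  have -> : (m.+2%:Z) = m.+1%:Z + 1 by lia.
  apply: ord_geM; first exact: IH.
  by apply: ord_geD; [exact: zm|exact: zm].
have cau : forall N : int, forall m n : nat, (`|N|%N <= m)%N ->
    ord_ge o N (zseq w (m + n) - zseq w m).
  move=> N m n hm; elim: n => [|n IH]; first by rewrite addn0 subrr; left.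
  have -> : zseq w (m + n.+1) - zseq w m =
     (zseq w (m + n).+1 - zseq w (m + n)) + (zseq w (m + n) - zseq w m).
    by rewrite addnS; ring.
  apply: ord_geD => //; apply: ord_geW (step _); lia.
have [l hl] : exists l : k, forall N : int, exists M : nat, forall n : nat,
    (M <= n)%N -> ord_ge o N (zseq w n - l).
  apply: (complete (u := zseq w)) => N; exists `|N|%N => m n hm hn.
  have [hmn|hmn] := leqP m n.
    rewrite -(subnKC hmn) -opprB; apply: ord_geN.
    by apply: cau.
  rewrite -(subnKC (ltnW hmn)); by apply: cau.
have lo : in_o o l.
  have [M hM] := hl 1.
  have -> : l = zseq w M - (zseq w M - l) by ring.
  apply: (ord_geW (N2 := 1)) => //; apply: ord_geB; first exact: zm.
  exact: hM.
exists l; split; last first.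
  have [M hM] := hl 1.
  have -> : l = zseq w M - (zseq w M - l) by ring.
  apply: ord_geB; first exact: zm.
  exact: hM.
apply/eqP; rewrite -subr_eq0; apply/eqP; apply: ord_ge_all => N.
have [M hM] := hl N.
have -> : l + l ^+ 2 - w = - (zseq w M.+1 - l) - (zseq w M - l) * (zseq w M + l).
  by rewrite /=; ring.
apply: ord_geB; first by apply: ord_geN; apply: hM.
rewrite -(addr0 N); apply: ord_geM; first by apply: hM.
apply: ord_geD => //; apply: (ord_geW (N2 := 1)) => //; exact: zm.
Qed.

End Aux.

Section Main.
Variable k : fieldType.
Variable K : local_field_res2 k.
Local Notation o := (ord K).
Local Notation q := ((resq K)%:R : rat).

Lemma q1 : 1 <= q.
Proof.
case: (res_finite K) => s [hs _ _ hrep].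
have [r rs _] := hrep 0 (or_introl erefl).
by rewrite ler1n -hs; move: rs; clear; case: s.
Qed.

Lemma absv_ge0 z : 0 <= absv K z.
Proof.
rewrite /absv; case: ifP => // _; apply: exprz_ge0.
exact: le_trans ler01 q1.
Qed.

Lemma absvE z : z != 0 -> absv K z = q ^ (- o z).
Proof. by rewrite /absv => /negbTE ->. Qed.

Lemma absv_le z1 z2 : z1 != 0 -> z2 != 0 -> o z2 <= o z1 -> absv K z1 <= absv K z2.
Proof.
move=> h1 h2 h; rewrite !absvE //; apply: (ler_weXz2l q1).
by rewrite lerN2.
Qed.

Lemma absvD x y : absv K (x + y) <= Num.max (absv K x) (absv K y).
Proof.
have [->|x0] := eqVneq x 0; first by rewrite add0r le_max lexx orbT.
have [->|y0] := eqVneq y 0; first by rewrite addr0 le_max lexx.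
have [->|s0] := eqVneq (x + y) 0.
  by rewrite /absv eqxx le_max absv_ge0.
have h := ordD K x0 y0 s0.
rewrite le_max; have [hxy|hxy] := leP (o x) (o y).
  by apply/orP; left; apply: absv_le => //; rewrite (min_idPl hxy) in h.
by apply/orP; right; apply: absv_le => //; rewrite (min_idPr (ltW hxy)) in h.
Qed.

Lemma diagB_upd n (a x : 'I_n -> k) i y :
  diagB a (fun j => if j == i then x i * y else x j) =
  diagB a x + a i * x i ^+ 2 * (y ^+ 2 - 1).
Proof.
rewrite /diagB (bigD1 i) //= [in RHS](bigD1 i) //= eqxx.
have -> : \sum_(j < n | j != i) a j * (if j == i then x i * y else x j) ^+ 2
        = \sum_(j < n | j != i) a j * x j ^+ 2.
  by apply: eq_bigr => j /negbTE ->.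
ring.
Qed.

Lemma key n (a x : 'I_n -> k) i : anisotropic a ->
  4%:R * (a i * x i ^+ 2) != 0 -> diagB a x != 0 ->
  o (diagB a x) <= o (4%:R * (a i * x i ^+ 2)).
Proof.
move=> hB; set c := a i * x i ^+ 2; set f : k := 4%:R.
set B := diagB a x => h4 hB0.
rewrite leNgt; apply/negP => hlt.
have f0 : f != 0 by apply: contraNneq h4 => ->; rewrite mul0r.
have c0 : c != 0 by apply: contraNneq h4 => ->; rewrite mulr0.
have fc0 : f * c != 0 by [].
set w := - B / (f * c).
have hw : w * (f * c) = - B by rewrite /w divfK.
have w0 : w != 0.
  apply: contraNneq hB0 => hw0; move: hw; rewrite hw0 mul0r => /eqP.
  by rewrite eq_sym oppr_eq0.
have mB0 : - B != 0 by rewrite oppr_eq0.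
have hwm : in_m o w.
  right; have := ordM K w0 fc0; rewrite hw ordN // => e.
  move: hlt; rewrite -/B e; lia.
have [z [hz zm]] := hensel hwm.
set y := 1 + 2%:R * z.
pose x' := fun j => if j == i then x i * y else x j.
have hx' : diagB a x' = 0.
  rewrite /x' diagB_upd -/B -/c.
  have -> : y ^+ 2 - 1 = f * (z + z ^+ 2) by rewrite /y /f; ring.
  have -> : c * (f * (z + z ^+ 2)) = w * (f * c) by rewrite hz; ring.
  by rewrite hw subrr.
have := hB x' hx' i; rewrite /x' eqxx => /eqP; rewrite mulf_eq0 => /orP [/eqP xi0|/eqP y0].
  by move: c0; rewrite /c xi0 expr2 !mulr0 eqxx.
have two0 : (2%:R : k) != 0.
  apply: contraNneq f0 => h; have -> : f = 2%:R * 2%:R by rewrite /f -natrM.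
  by rewrite h mul0r.
have o2 : 1 <= o 2%:R by case: (res_char2 K) => // h; rewrite h eqxx in two0.
have e : 2%:R * z = -1 by apply/eqP; rewrite -subr_eq0 opprK addrC; apply/eqP.
have [z0|z0] := eqVneq z 0.
  by move: e; rewrite z0 mulr0 => /eqP; rewrite eq_sym oppr_eq0 oner_eq0.
case: zm => [/eqP|hz1]; first by rewrite (negbTE z0).
have := ordM K two0 z0; rewrite e ordN1; lia.
Qed.

End Main.

Theorem lemma2p1 (k : fieldType) (K : local_field_res2 k) (n : nat)
  (a : 'I_n -> k)
  (ha : forall i, a i != 0 /\ (0 <= ord K (a i) <= 1))
  (hB : anisotropic a)
  (x : 'I_n -> k) (hx : exists i, x i != 0) :
  \big[Num.max/0]_(i < n) absv K (a i * x i ^+ 2) >= absv K (diagB a x) /\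
  absv K (diagB a x) >= \big[Num.max/0]_(i < n) absv K (4%:R * a i * x i ^+ 2).
Proof.
split.
  rewrite /diagB; apply: (big_ind2 (fun s m => absv K s <= m)).
  - by rewrite /absv eqxx.
  - move=> s1 m1 s2 m2 h1 h2; apply: le_trans (absvD K s1 s2) _.
    rewrite ge_max; apply/andP; split.
      by apply: le_trans h1 _; rewrite le_max lexx.
    by apply: le_trans h2 _; rewrite le_max lexx orbT.
  - by [].
apply: bigmax_le; first exact: absv_ge0.
move=> i _; rewrite -mulrA.
have [->|h4] := eqVneq (4%:R * (a i * x i ^+ 2)) 0.
  by rewrite /absv eqxx absv_ge0.
have hB0 : diagB a x != 0.
  apply/negP => /eqP h0; have := hB x h0 i => xi0.
  by move: h4; rewrite xi0 expr2 !mulr0 eqxx.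
by apply: absv_le => //; apply: key.
Qed.
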